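(* Let $\sigma=(\beta_l,\beta_h)$ be an arbitrary strategy, $\{\mathcal{I}_N\}$ an arbitrary sequence of instances of the binary voting game, and $\Sigma_N$ the symmetric profile in $\mathcal{I}_N$ in which every agent plays $\sigma$. Let $f=\min(f_H,f_L)$ where $f_H=P_{hH}\beta_h+P_{lH}\beta_l-\mu$ and $f_L=P_{hL}(1-\beta_h)+P_{lL}(1-\beta_l)-(1-\mu)$ (the excess expected vote share of $\Sigma_N$, which does not depend on $N$). If $f>0$ then $\lim_{N\to\infty}A(\Sigma_N)=1$; if $f\le0$ then $A(\Sigma_N)$ does not converge to $1$.
   Context: Binary voting game. An instance has $N$ agents each voting for $\mathbf{A}$ or $\mathbf{R}$. Unobserved world state $W\in\{L,H\}$ with common prior $P_L,P_H>0$. Conditional on $W$, each agent independently receives a signal $S_n\in\{l,h\}$ with $P_{sw}=\Pr[S_n=s\mid W=w]$, $P_{hH}>P_{hL}$, $P_{lH}<P_{lL}$. With threshold $\mu\in(0,1)$, $\mathbf{A}$ wins iff at least $\mu N$ agents vote $\mathbf{A}$, else $\mathbf{R}$ wins. Agents have utilities $v_n:\{L,H\}\times\{\mathbf{A},\mathbf{R}\}\to\{0,\dots,B\}$ with $v_n(H,\mathbf{A})>v_n(L,\mathbf{A})$, $v_n(H,\mathbf{R})<v_n(L,\mathbf{R})$, and are friendly, unfriendly or contingent in fixed proportions $\alpha_F<\mu$, $\alpha_U<1-\mu$, $\alpha_C$ (counts $\lfloor\alpha_FN\rfloor,\lfloor\alpha_UN\rfloor$, rest), so the informed majority decision is $\mathbf{A}$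 in $H$ and $\mathbf{R}$ in $L$. A sequence of instances: $\mathcal{I}_N$ has $N$ agents, all share $\mu$, prior, signal distribution and $\alpha$'s. Strategy $\sigma=(\beta_l,\beta_h)$, $\beta_s$ = probability of voting $\mathbf{A}$ on signal $s$. Fidelity $A(\Sigma)=P_L\lambda^{\mathbf{R}}_L(\Sigma)+P_H\lambda^{\mathbf{A}}_H(\Sigma)$, with $\lambda^{\mathbf{X}}_w(\Sigma)$ the ex-ante probability that $\mathbf{X}$ wins in state $w$. *)

(* Defs.v *)
From HB Require Import structures.
From mathcomp Require Import all_boot all_order all_algebra.
From mathcomp Require Import all_classical all_reals all_analysis.
Set Implicit Arguments. Unset Strict Implicit. Unset Printing Implicit Defensive.
Import Order.TTheory GRing.Theory Num.Theory.
Local Open Scope ring_scope.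

(* Encoding: world state W : bool with true = H, false = L;
   signal S : bool with true = h, false = l;
   vote : bool with true = A, false = R. *)

Section Voting.
Variable R : realType.

(* Signal distribution: P_hw given for w = H (pH) and w = L (pL);
   P_lw := 1 - P_hw. *)
Definition Psig (pH pL : R) (w s : bool) : R :=
  let ph := if w then pH else pL in if s then ph else 1 - ph.

(* A strategy sigma = (beta_l, beta_h): probability of voting A on signal s. *)
Definition Pvote (sigma : R * R) (s v : bool) : R :=
  let b := if s then sigma.2 else sigma.1 in if v then b else 1 - b.

Definition A_wins (mu : R) (N : nat) (v : {ffun 'I_N -> bool}) : bool :=
  mu * N%:R <= (#|[set n | v n]|)%:R.

Definition lambdaA (pH pL mu : R) (N : nat) (Sig : 'I_N -> R * R) (w : bool) : R :=
  \sum_(s : {ffun 'I_N -> bool}) \sum_(v : {ffun 'I_N -> bool} | A_wins mu v)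
     \prod_(n < N) (Psig pH pL w (s n) * Pvote (Sig n) (s n) (v n)).

Definition lambdaR (pH pL mu : R) (N : nat) (Sig : 'I_N -> R * R) (w : bool) : R :=
  \sum_(s : {ffun 'I_N -> bool}) \sum_(v : {ffun 'I_N -> bool} | ~~ A_wins mu v)
     \prod_(n < N) (Psig pH pL w (s n) * Pvote (Sig n) (s n) (v n)).

(* Fidelity A(Sigma) = P_L lambda^R_L + P_H lambda^A_H, with prior P_H = prH,
   P_L = 1 - prH. *)
Definition fidelity (prH pH pL mu : R) (N : nat) (Sig : 'I_N -> R * R) : R :=
  (1 - prH) * lambdaR pH pL mu Sig false + prH * lambdaA pH pL mu Sig true.

Definition sym_profile (N : nat) (sigma : R * R) : 'I_N -> R * R := fun _ => sigma.

Definition fH (pH mu : R) (sigma : R * R) : R :=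
  pH * sigma.2 + (1 - pH) * sigma.1 - mu.
Definition fL (pL mu : R) (sigma : R * R) : R :=
  pL * (1 - sigma.2) + (1 - pL) * (1 - sigma.1) - (1 - mu).

End Voting.

(* Main.v *)
Require Import Defs.
From HB Require Import structures.
From mathcomp Require Import all_boot all_order all_algebra.
From mathcomp Require Import all_classical all_reals all_analysis.
From mathcomp Require Import ring lra.
Import Order.TTheory GRing.Theory Num.Theory.
Import numFieldNormedType.Exports.
Local Open Scope ring_scope.
Local Open Scope classical_set_scope.
Set Implicit Arguments. Unset Strict Implicit. Unset Printing Implicit Defensive.
Definition rw (R : realType) (q : R) (b : bool) : R := if b then q else 1 - q.
Definition wt (R : realType) N (q : R) (v : {ffun 'I_N -> bool}) : R :=
  \prod_(n < N) rw q (v n).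
Definition Ex (R : realType) N (q : R) (F : {ffun 'I_N -> bool} -> R) : R :=
  \sum_v wt q v * F v.
Arguments Ex {R} N q F.
Definition cnt (R : realType) N (v : {ffun 'I_N -> bool}) : R :=
  \sum_(n < N) ((v n : nat)%:R).
Definition Yc (R : realType) N (q : R) (v : {ffun 'I_N -> bool}) : R :=
  cnt R v - N%:R * q.

Definition fcons N (b : bool) (v : {ffun 'I_N -> bool}) : {ffun 'I_N.+1 -> bool} :=
  [ffun i => if unlift ord0 i is Some j then v j else b].

Lemma fcons0 N b v : @fcons N b v ord0 = b.
Proof. by rewrite ffunE unlift_none. Qed.

Lemma fconsS N b v (j : 'I_N) : @fcons N b v (lift ord0 j) = v j.
Proof. by rewrite ffunE liftK. Qed.

Lemma sum_fcons (R : realType) N (G : {ffun 'I_N.+1 -> bool} -> R) :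
  \sum_w G w = \sum_(b : bool) \sum_(v : {ffun 'I_N -> bool}) G (fcons b v).
Proof.
rewrite pair_big /=.
pose h := fun p : bool * {ffun 'I_N -> bool} => fcons p.1 p.2.
pose g := fun w : {ffun 'I_N.+1 -> bool} => (w ord0, [ffun j => w (lift ord0 j)]).
rewrite (reindex h) //.
exists g => [[b v] _|w _].
  by rewrite /g /h /= fcons0; congr pair; apply/ffunP => j; rewrite ffunE fconsS.
rewrite /g /h /=; apply/ffunP => i; rewrite ffunE.
by case: unliftP => [j ->|->]; rewrite ?ffunE.
Qed.

Lemma Ex_rec (R : realType) N (q : R) F :
  Ex (N.+1) q F = q * Ex N q (fun v => F (fcons true v))
                + (1 - q) * Ex N q (fun v => F (fcons false v)).
Proof.
rewrite /Ex sum_fcons big_bool /= !mulr_sumr; congr (_ + _); apply: eq_bigr => v _;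
rewrite /wt big_ord_recl fcons0 /=;
under eq_bigr do rewrite fconsS; rewrite /rw /=; ring.
Qed.

Lemma Ex0 (R : realType) (q : R) F : Ex 0 q F = F [ffun i => false].
Proof.
rewrite /Ex (big_pred1 [ffun i => false]) ?/wt ?big_ord0 ?mul1r //.
by move=> v /=; apply/esym/eqP/ffunP => -[].
Qed.

Lemma cnt_fcons (R : realType) N b v : cnt R (@fcons N b v) = (b : nat)%:R + cnt R v.
Proof. by rewrite /cnt big_ord_recl fcons0; under eq_bigr do rewrite fconsS. Qed.

Lemma Yc_fcons (R : realType) N (q : R) b v :
  Yc q (@fcons N b v) = Yc q v + ((b : nat)%:R - q).
Proof. rewrite /Yc cnt_fcons -natr1; ring. Qed.

Lemma Yc0 (R : realType) (q : R) v : Yc (N := 0) q v = 0.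
Proof. by rewrite /Yc /cnt big_ord0 mul0r subr0. Qed.

Lemma Ex_ext (R : realType) N (q : R) F G : (forall v, F v = G v) -> Ex N q F = Ex N q G.
Proof. by move=> h; apply: eq_bigr => v _; rewrite h. Qed.

Lemma Ex_poly (R : realType) N (q : R) (a0 a1 a2 a3 a4 : R) F :
  Ex N q (fun v => a0 + a1 * F v + a2 * F v ^+ 2 + a3 * F v ^+ 3 + a4 * F v ^+ 4) =
  a0 * Ex N q (fun=> 1) + a1 * Ex N q F + a2 * Ex N q (fun v => F v ^+ 2)
  + a3 * Ex N q (fun v => F v ^+ 3) + a4 * Ex N q (fun v => F v ^+ 4).
Proof.
rewrite /Ex !mulr_sumr -!big_split /=; apply: eq_bigr => v _; ring.
Qed.

Lemma moments (R : realType) N (q : R) :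
  let c := q * (1 - q) in
  [/\ Ex N q (fun=> 1) = 1, Ex N q (Yc q) = 0,
      Ex N q (fun v => Yc q v ^+ 2) = N%:R * c,
      Ex N q (fun v => Yc q v ^+ 3) = N%:R * c * (1 - 2 * q)
    & Ex N q (fun v => Yc q v ^+ 4) = 3 * c ^+ 2 * N%:R ^+ 2 + N%:R * c * (1 - 6 * c)].
Proof.
move=> c; elim: N => [|N [h0 h1 h2 h3 h4]].
  by rewrite !Ex0 !Yc0 /c; split; ring.
have E k a0 a1 a2 a3 a4 : (forall b, Ex N q (fun v => Yc q (fcons b v) ^+ k) =
   Ex N q (fun v => a0 b + a1 b * Yc q v + a2 b * Yc q v ^+ 2 + a3 b * Yc q v ^+ 3 + a4 b * Yc q v ^+ 4)) ->
  Ex N.+1 q (fun v => Yc q v ^+ k) = q * (a0 true + a1 true * 0 + a2 true * (N%:R * c)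
     + a3 true * (N%:R * c * (1 - 2 * q)) + a4 true * (3 * c ^+ 2 * N%:R ^+ 2 + N%:R * c * (1 - 6 * c)))
   + (1 - q) * (a0 false + a1 false * 0 + a2 false * (N%:R * c)
     + a3 false * (N%:R * c * (1 - 2 * q)) + a4 false * (3 * c ^+ 2 * N%:R ^+ 2 + N%:R * c * (1 - 6 * c))).
  move=> hb; rewrite Ex_rec !hb !Ex_poly h1 h2 h3 h4 [Ex N q _]h0; ring.
split.
- rewrite Ex_rec /= h0; ring.
- rewrite (_ : Ex N.+1 q (Yc q) = Ex N.+1 q (fun v => Yc q v ^+ 1)); last first.
    by apply: Ex_ext => v; rewrite expr1.
  rewrite (E 1%N (fun b => (b:nat)%:R - q) (fun=> 1) (fun=> 0) (fun=> 0) (fun=> 0)).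
    by rewrite /c /=; ring.
  by move=> b; apply: Ex_ext => v; rewrite Yc_fcons; ring.
- rewrite (E 2%N (fun b => ((b:nat)%:R - q) ^+ 2) (fun b => 2 * ((b:nat)%:R - q)) (fun=> 1) (fun=> 0) (fun=> 0)).
    by rewrite /c /= -natr1; ring.
  by move=> b; apply: Ex_ext => v; rewrite Yc_fcons; ring.
- rewrite (E 3%N (fun b => ((b:nat)%:R - q) ^+ 3) (fun b => 3 * ((b:nat)%:R - q) ^+ 2)
     (fun b => 3 * ((b:nat)%:R - q)) (fun=> 1) (fun=> 0)).
    by rewrite /c /= -natr1; ring.
  by move=> b; apply: Ex_ext => v; rewrite Yc_fcons; ring.
- rewrite (E 4%N (fun b => ((b:nat)%:R - q) ^+ 4) (fun b => 4 * ((b:nat)%:R - q) ^+ 3)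
     (fun b => 6 * ((b:nat)%:R - q) ^+ 2) (fun b => 4 * ((b:nat)%:R - q)) (fun=> 1)).
    by rewrite /c /= -natr1; ring.
  by move=> b; apply: Ex_ext => v; rewrite Yc_fcons; ring.
Qed.

Lemma Ex_scale (R : realType) N (q a : R) F : Ex N q (fun v => a * F v) = a * Ex N q F.
Proof. by rewrite /Ex mulr_sumr; apply: eq_bigr => v _; ring. Qed.

Lemma Ex_le (R : realType) N (q : R) F G : 0 <= q <= 1 ->
  (forall v, F v <= G v) -> Ex N q F <= Ex N q G.
Proof.
move=> /andP[q0 q1] h; apply: ler_sum => v _; apply: ler_wpM2l => //.
by apply: prodr_ge0 => n _; rewrite /rw; case: (v n) => //; rewrite subr_ge0.
Qed.

Lemma pw1 (R : realType) (s y : R) : 0 < s ->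
  s^+2 * y^+2 - y^+4 / 8 - 2 * s^+3 * y <= 7 * s^+4 * ((y < 0)%R : nat)%:R.
Proof.
move=> s0; have s0' := ltW s0.
case: (boolP (y < 0)) => hy /=; rewrite ?mulr1 ?mulr0; [| move: hy; rewrite -leNgt => hy].
  have k1 := sqr_ge0 (y^+2 - 6 * s^+2).
  have k2 := mulr_ge0 (sqr_ge0 s) (sqr_ge0 (y + 2 * s)).
  have k3 := exprn_ge0 4 s0'.
  nra.
have k1 := mulr_ge0 (sqr_ge0 y) (sqr_ge0 (y - 2 * s)).
have k2 := mulr_ge0 (mulr_ge0 hy s0') (sqr_ge0 (2 * y - 3 * s)).
have k3 := mulr_ge0 hy (exprn_ge0 3 s0').
nra.
Qed.

Lemma pw2 (R : realType) (s y : R) : 0 < s ->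
  s^+2 * y^+2 - y^+4 / 8 + 2 * s^+3 * y <= 7 * s^+4 * ((0 <= y)%R : nat)%:R.
Proof.
move=> s0; have s0' := ltW s0.
case: (boolP (0 <= y)) => hy /=; rewrite ?mulr1 ?mulr0; [| move: hy; rewrite -ltNge => hy].
  have k1 := sqr_ge0 (y^+2 - 6 * s^+2).
  have k2 := mulr_ge0 (sqr_ge0 s) (sqr_ge0 (y - 2 * s)).
  have k3 := exprn_ge0 4 s0'.
  nra.
have hy' : 0 <= - y by rewrite oppr_ge0 ltW.
have k1 := mulr_ge0 (sqr_ge0 y) (sqr_ge0 (y + 2 * s)).
have k2 := mulr_ge0 (mulr_ge0 hy' s0') (sqr_ge0 (2 * y + 3 * s)).
have k3 := mulr_ge0 hy' (exprn_ge0 3 s0').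
nra.
Qed.

Lemma anti (R : realType) N (q : R) : 0 < q < 1 -> 1 <= N%:R * (q * (1 - q)) ->
  1 / 14 <= Ex N q (fun v => ((Yc q v < 0)%R : nat)%:R) /\
  1 / 14 <= Ex N q (fun v => ((0 <= Yc q v)%R : nat)%:R).
Proof.
move=> /andP[q0 q1] hS.
have qq : 0 <= q <= 1 by rewrite !ltW.
have c0 : 0 <= q * (1 - q) by rewrite mulr_ge0 ?ltW // subr_gt0.
set S := N%:R * (q * (1 - q)) in hS *.
have S0 : 0 < S by lra.
set s := Num.sqrt S.
have s0 : 0 < s by rewrite sqrtr_gt0.
have s2 : s ^+ 2 = S by rewrite sqr_sqrtr // ltW.
have s4 : s ^+ 4 = S ^+ 2 by rewrite -s2 -exprM.
have [h0 h1 h2 h3 h4] := moments N q.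
rewrite -/S in h2 h3.
have m4 : Ex N q (fun v => Yc q v ^+ 4) = 3 * S ^+ 2 + S * (1 - 6 * (q * (1 - q))).
  by rewrite h4 /S; ring.
have key : forall sg : R, sg = 1 \/ sg = -1 -> forall P : {ffun 'I_N -> bool} -> R,
  (forall v, s^+2 * Yc q v ^+2 - Yc q v ^+4 / 8 - sg * 2 * s^+3 * Yc q v <= 7 * s^+4 * P v) ->
  1 / 14 <= Ex N q P.
  move=> sg hsg P hP.
  have := Ex_le qq hP.
  rewrite Ex_scale.
  rewrite (@Ex_ext R N q _ (fun v => 0 + (- (sg * 2 * s^+3)) * Yc q v + s^+2 * Yc q v ^+ 2
       + 0 * Yc q v ^+ 3 + (- (1/8)) * Yc q v ^+ 4)); last by move=> v; ring.
  rewrite Ex_poly h1 h2 m4 s4 s2.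
  have hSS : S <= S ^+ 2 by rewrite expr2 ler_peMl // ltW.
  have hSc : 0 <= S * (q * (1 - q)) by rewrite mulr_ge0 // ltW.
  have S20 : 0 < S ^+ 2 by rewrite exprn_gt0.
  move=> hh.
  have : S ^+ 2 / 2 <= 7 * S ^+ 2 * Ex N q P by lra.
  move: (Ex N q P) => e he.
  nra.
split.
  by apply: (key 1); [left|move=> v; rewrite mul1r; apply: pw1].
apply: (key (-1)); first by right.
move=> v; rewrite (_ : _ - _ = s ^+ 2 * Yc q v ^+ 2 - Yc q v ^+ 4 / 8 + 2 * s ^+ 3 * Yc q v); last by ring.
exact: pw2.
Qed.

Lemma cheb (R : realType) N (q t : R) (F : {ffun 'I_N -> bool} -> bool) : 0 <= q <= 1 ->
  (forall v, F v -> t ^+ 2 <= Yc q v ^+ 2) ->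
  t ^+ 2 * Ex N q (fun v => (F v : nat)%:R) <= N%:R * (q * (1 - q)).
Proof.
move=> qq hF; have [_ _ h2 _ _] := moments N q.
rewrite -Ex_scale -h2; apply: Ex_le => // v.
by case: (boolP (F v)) => h /=; rewrite ?mulr1 ?mulr0 ?hF ?sqr_ge0.
Qed.

Definition qv (R : realType) (p : R) (sg : R * R) : R := p * sg.2 + (1 - p) * sg.1.

Lemma A_winsE (R : realType) (mu : R) N (v : {ffun 'I_N -> bool}) :
  A_wins mu v = (mu * N%:R <= cnt R v).
Proof.
rewrite /A_wins; congr (_ <= _).
rewrite -sum1_card /cnt natr_sum big_mkcond /=; apply: eq_bigr => n _.
by rewrite inE; case: (v n).
Qed.

Lemma lam_gen (R : realType) (pH pL mu : R) N (sg : R * R) (w : bool) (P : pred {ffun 'I_N -> bool}) :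
  \sum_(s : {ffun 'I_N -> bool}) \sum_(v : {ffun 'I_N -> bool} | P v)
     \prod_(n < N) (Psig pH pL w (s n) * Pvote (@sym_profile R N sg n) (s n) (v n))
  = Ex N (qv (if w then pH else pL) sg) (fun v => (P v : nat)%:R).
Proof.
rewrite exchange_big big_mkcond /Ex /=; apply: eq_bigr => v _.
case: (P v); rewrite ?mulr1 ?mulr0 //.
rewrite -(bigA_distr_bigA (fun n b => Psig pH pL w b * Pvote (@sym_profile R N sg n) b (v n))).
rewrite /wt; apply: eq_bigr => n _; rewrite big_bool /Psig /Pvote /sym_profile /rw /qv.
by case: (v n); case: w => /=; ring.
Qed.

Lemma lamA (R : realType) (pH pL mu : R) N (sg : R * R) (w : bool) :
  lambdaA pH pL mu (@sym_profile R N sg) w =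
  Ex N (qv (if w then pH else pL) sg) (fun v => (A_wins mu v : nat)%:R).
Proof. exact: lam_gen. Qed.

Lemma lamR (R : realType) (pH pL mu : R) N (sg : R * R) (w : bool) :
  lambdaR pH pL mu (@sym_profile R N sg) w =
  Ex N (qv (if w then pH else pL) sg) (fun v => (~~ A_wins mu v : nat)%:R).
Proof. exact: lam_gen. Qed.

Lemma Ex_compl (R : realType) N (q : R) (b : pred {ffun 'I_N -> bool}) :
  Ex N q (fun v => (~~ b v : nat)%:R) = 1 - Ex N q (fun v => (b v : nat)%:R).
Proof.
have [h0 _ _ _ _] := moments N q.
have : Ex N q (fun=> 1) = Ex N q (fun v => (~~ b v : nat)%:R) + Ex N q (fun v => (b v : nat)%:R).
  by rewrite /Ex -big_split; apply: eq_bigr => v _; case: (b v) => /=; ring.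
rewrite h0; lra.
Qed.

Lemma Ex_ind (R : realType) N (q : R) (b : pred {ffun 'I_N -> bool}) : 0 <= q <= 1 ->
  0 <= Ex N q (fun v => (b v : nat)%:R) <= 1.
Proof.
move=> qq; have [h0 _ _ _ _] := moments N q.
apply/andP; split.
  have := @Ex_le R N q (fun=> 0) (fun v => (b v : nat)%:R) qq.
  rewrite (_ : Ex N q (fun=> 0) = 0); last by rewrite /Ex big1 // => v _; rewrite mulr0.
  by apply=> v; apply: ler0n.
rewrite -[X in _ <= X]h0; apply: Ex_le => // v; by case: (b v) => /=; rewrite ?ler01 ?lexx.
Qed.

Lemma qv_bounds (R : realType) (p : R) (sg : R * R) : 0 <= p <= 1 ->
  0 <= sg.1 <= 1 -> 0 <= sg.2 <= 1 -> 0 <= qv p sg <= 1.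
Proof. rewrite /qv => /andP[? ?] /andP[? ?] /andP[? ?]; apply/andP; split; nra. Qed.

Lemma tail_hi (R : realType) N (q mu : R) : 0 <= q <= 1 -> q < mu ->
  (N%:R * (mu - q)) ^+ 2 * Ex N q (fun v => (A_wins mu v : nat)%:R) <= N%:R * (q * (1 - q)).
Proof.
move=> qq hq; apply: cheb => // v; rewrite A_winsE /Yc => h.
have h1 : 0 <= N%:R * (mu - q) by rewrite mulr_ge0 // subr_ge0 ltW.
nra.
Qed.

Lemma tail_lo (R : realType) N (q mu : R) : 0 <= q <= 1 -> mu < q ->
  (N%:R * (q - mu)) ^+ 2 * Ex N q (fun v => (~~ A_wins mu v : nat)%:R) <= N%:R * (q * (1 - q)).
Proof.
move=> qq hq; apply: cheb => // v; rewrite A_winsE /Yc -ltNge => h.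
have h1 : 0 <= N%:R * (q - mu) by rewrite mulr_ge0 // subr_ge0 ltW.
nra.
Qed.

Lemma tail_small (R : realType) (q d t : R) : 0 <= q <= 1 -> 0 < d -> 0 < t ->
  exists N0, forall N (E : R), (N0 <= N)%N -> 0 <= E ->
    (N%:R * d) ^+ 2 * E <= N%:R * (q * (1 - q)) -> E <= t.
Proof.
move=> /andP[q0 q1] d0 t0.
have d2 : 0 < d ^+ 2 by rewrite exprn_gt0.
have td : 0 < t * d ^+ 2 by rewrite mulr_gt0.
exists (Num.Def.archi_bound (1 / (t * d ^+ 2))).+1 => N E hN E0 h.
have hb := archi_boundP (x := 1 / (t * d ^+ 2)) (ltW (divr_gt0 ltr01 td)).
have hN' : (Num.Def.archi_bound (1 / (t * d ^+ 2))).+1%:R <= N%:R :> R by rewrite ler_nat.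
have hN1 : (Num.Def.archi_bound (1 / (t * d ^+ 2)))%:R <= N%:R :> R.
  by apply: le_trans hN'; rewrite ler_nat.
have N0 : 0 < N%:R :> R by apply: lt_le_trans hN'; rewrite ltr0n.
have c1 : q * (1 - q) <= 1 by nra.
have hNd : 1 < N%:R * (t * d ^+ 2).
  by rewrite -ltr_pdivrMr //; apply: lt_le_trans hb hN1.
have : N%:R * (N%:R * d ^+ 2 * E) <= N%:R * 1.
  apply: le_trans (_ : N%:R * (q * (1 - q)) <= _); last by rewrite ler_pM2l.
  by rewrite (_ : _ * (_ * E) = (N%:R * d) ^+ 2 * E) //; ring.
rewrite ler_pM2l // => h2.
have : N%:R * d ^+ 2 * E < N%:R * d ^+ 2 * t by nra.
rewrite ltr_pM2l //; [exact: ltW | exact: mulr_gt0].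
Qed.

Lemma large (R : realType) (c : R) : 0 < c -> exists N0, forall N, (N0 <= N)%N -> 1 <= N%:R * c.
Proof.
move=> c0; exists (Num.Def.archi_bound (1 / c)) => N hN.
have hb := archi_boundP (x := 1 / c) (ltW (divr_gt0 ltr01 c0)).
have : 1 / c <= N%:R by apply: le_trans (ltW hb) _; rewrite ler_nat.
by rewrite ler_pdivrMr.
Qed.

Unset Implicit Arguments.

Theorem corollary2 (R : realType)
  (prH : R) (pH pL : R) (mu : R) (alphaF alphaU : R) (sigma : R * R)
  (hprH : 0 < prH < 1)
  (hpH : 0 <= pH <= 1) (hpL : 0 <= pL <= 1) (hsig : pL < pH)
  (hmu : 0 < mu < 1)
  (haF : 0 <= alphaF) (haU : 0 <= alphaU) (haFU : alphaF + alphaU <= 1)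
  (haFmu : alphaF < mu) (haUmu : alphaU < 1 - mu)
  (hbl : 0 <= sigma.1 <= 1) (hbh : 0 <= sigma.2 <= 1) :
  let f := Num.min (fH pH mu sigma) (fL pL mu sigma) in
  let A := fun N : nat => fidelity prH pH pL mu (@sym_profile R N sigma) in
  (0 < f -> A @ \oo --> (1 : R)) /\
  (f <= 0 -> ~ (A @ \oo --> (1 : R))).
Proof.
move=> f A.
have fHe : fH pH mu sigma = qv pH sigma - mu by rewrite /fH /qv; ring.
have fLe : fL pL mu sigma = mu - qv pL sigma by rewrite /fL /qv; ring.
have qHb := qv_bounds hpH hbl hbh.
have qLb := qv_bounds hpL hbl hbh.
set qH := qv pH sigma in fHe qHb; set qL := qv pL sigma in fLe qLb.
case/andP: hprH => pr0 pr1; case/andP: hmu => mu0 mu1.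
pose EA := fun N (q : R) => Ex N q (fun v : {ffun 'I_N -> bool} => (A_wins mu v : nat)%:R).
have Ae N : A N = (1 - prH) * (1 - EA N qL) + prH * EA N qH.
  by rewrite /A /fidelity lamA lamR Ex_compl.
have EAb N q : 0 <= q <= 1 -> 0 <= EA N q <= 1 by move=> qq; exact: Ex_ind.
split.
  rewrite /f lt_min fHe fLe => /andP[dH dL].
  apply/cvgrPdist_le => eps eps0.
  have eps2 : 0 < eps / 2 by rewrite divr_gt0.
  have [N1 H1] := tail_small qLb dL eps2.
  have [N2 H2] := tail_small qHb dH eps2.
  exists (maxn N1 N2) => // N hN.
  have hN1 : (N1 <= N)%N by apply: leq_trans hN; apply: leq_maxl.
  have hN2 : (N2 <= N)%N by apply: leq_trans hN; apply: leq_maxr.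
  have bL : EA N qL <= eps / 2.
    apply: (H1 N) => //; first by case/andP: (EAb N qL qLb).
    by apply: tail_hi => //; lra.
  have bH : 1 - EA N qH <= eps / 2.
    apply: (H2 N) => //; first by case/andP: (EAb N qH qHb) => _ ?; lra.
    by rewrite /EA -Ex_compl; apply: tail_lo => //; lra.
  have := EAb N qL qLb; have := EAb N qH qHb.
  rewrite Ae ler_norml => /andP[? ?] /andP[? ?].
  apply/andP; split; nra.
rewrite /f ge_min fHe fLe => fle hcv.
have [eps [eps0 [N0 HN0]]] : exists eps, 0 < eps /\
    exists N0, forall N, (N0 <= N)%N -> A N <= 1 - eps.
  case/orP: fle => hq.
  + have : qH <= mu by lra.
    rewrite le_eqVlt => /orP[/eqP qe|qlt].
    * have c0 : 0 < qH * (1 - qH) by rewrite qe mulr_gt0 // subr_gt0.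
      have [N1 H1] := large c0.
      exists (prH / 14); split; first by rewrite divr_gt0.
      exists N1 => N hN.
      have qq : 0 < qH < 1 by rewrite qe mu0 mu1.
      have [h1 _] := anti qq (H1 N hN).
      have : EA N qH = 1 - Ex N qH (fun v => ((Yc qH v < 0)%R : nat)%:R).
        rewrite -Ex_compl; apply: Ex_ext => v.
        by rewrite A_winsE /Yc -leNgt subr_ge0 qe mulrC.
      have := EAb N qL qLb; rewrite Ae => /andP[? ?] ?.
      nra.
    * have dd : 0 < mu - qH by rewrite subr_gt0.
      have h12 : 0 < 1 / 2 :> R by rewrite divr_gt0 ?ltr01 ?ltr0n.
      have [N1 H1] := tail_small qHb dd h12.
      exists (prH / 2); split; first by rewrite divr_gt0.
      exists N1 => N hN.
      have bH : EA N qH <= 1 / 2.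
        apply: (H1 N) => //; first by case/andP: (EAb N qH qHb).
        exact: tail_hi.
      have := EAb N qL qLb; rewrite Ae => /andP[? ?].
      nra.
  + have : mu <= qL by lra.
    rewrite le_eqVlt => /orP[/eqP qe|qlt].
    * have c0 : 0 < qL * (1 - qL) by rewrite -qe mulr_gt0 // subr_gt0.
      have [N1 H1] := large c0.
      exists ((1 - prH) / 14); split; first by rewrite divr_gt0 // subr_gt0.
      exists N1 => N hN.
      have qq : 0 < qL < 1 by rewrite -qe mu0 mu1.
      have [_ h1] := anti qq (H1 N hN).
      have : EA N qL = Ex N qL (fun v => ((0 <= Yc qL v)%R : nat)%:R).
        apply: Ex_ext => v.
        by rewrite A_winsE /Yc subr_ge0 qe mulrC.
      have := EAb N qH qHb; rewrite Ae => /andP[? ?] ?.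
      nra.
    * have dd : 0 < qL - mu by rewrite subr_gt0.
      have h12 : 0 < 1 / 2 :> R by rewrite divr_gt0 ?ltr01 ?ltr0n.
      have [N1 H1] := tail_small qLb dd h12.
      exists ((1 - prH) / 2); split; first by rewrite divr_gt0 // subr_gt0.
      exists N1 => N hN.
      have bL : 1 - EA N qL <= 1 / 2.
        apply: (H1 N) => //; first by case/andP: (EAb N qL qLb) => _ ?; lra.
        by rewrite /EA -Ex_compl; apply: tail_lo.
      have := EAb N qH qHb; rewrite Ae => /andP[? ?].
      nra.
have eps2 : 0 < eps / 2 by rewrite divr_gt0.
move/cvgrPdist_le: hcv => /(_ (eps / 2) eps2) [N1 _ HN1].
have h1 := HN1 (maxn N0 N1) (leq_maxr _ _).
have h2 := HN0 (maxn N0 N1) (leq_maxl _ _).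
move: h1; rewrite /= ler_norml => /andP[? ?].
lra.
Qed.
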